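(* Let ${}^*\mathbb{C}$, ${}^*\mathbb{R}$ be the ultrapowers and $\rho=\langle R_\varphi\rangle$ as in the context. Then: (i) for $(A_\varphi)\in\mathbb{C}^{\mathcal{D}_0}$, $(A_\varphi)\in\mathcal{M}(\mathbb{C}^{\mathcal{D}_0})$ if and only if $\langle A_\varphi\rangle\in\mathcal{M}_\rho({}^*\mathbb{C})$; (ii) the map $\widehat{A_\varphi}\mapsto\widehat{\langle A_\varphi\rangle}$ is a well-defined field isomorphism from $\widehat{\mathbb{C}^{\mathcal{D}_0}}$ onto ${}^\rho\mathbb{C}$, restricting to an isomorphism of $\widehat{\mathbb{R}^{\mathcal{D}_0}}$ onto ${}^\rho\mathbb{R}$, and it preserves the valuation, the ultra-norm and the ultra-metric; (iii) the order topology and the metric topology on $\widehat{\mathbb{C}^{\mathcal{D}_0}}$ coincide.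
   Context: Fix $\mathcal{D}_0=\mathcal{D}(\mathbb{R}^d)$. For $\varphi\in\mathcal{D}_0$ let $R_\varphi=\sup\{\|x\|:\varphi(x)\neq0\}$ if $\varphi\neq0$, $R_0=1$. For $n\in\mathbb{N}$, $\mathcal{D}_n$ is the set of $\varphi\in\mathcal{D}_0$ that are real-valued, even, with $R_\varphi\le1/n$, $\int\varphi=1$, $\int x^\alpha\varphi(x)dx=0$ for $1\le|\alpha|\le n$, $\int|\varphi|\le1+1/n$, and $\sup_x|\partial^\alpha\varphi(x)|\le R_\varphi^{-2(|\alpha|+d)}$ for $|\alpha|\le n$. $\mathcal{U}$ is a fixed free ultrafilter on $\mathcal{D}_0$ containing every $\mathcal{D}_n$ and $\mathfrak c^+$-good ($\mathfrak c=\mathrm{card}\,\mathbb{R}$); ''$P(\varphi)$ a.e.'' means $\{\varphi:P(\varphi)\}\in\mathcal{U}$. Asymptotic numbers: $\mathcal{M}(\mathbb{C}^{\mathcal{D}_0})$ = nets with $|A_\varphi|\le R_\varphi^{-m}$ a.e. for some $m\in\mathbb{N}$; $\mathcal{N}(\mathbb{C}^{\mathcal{D}_0})$ = nets with $|A_\varphi|<R_\varphi^p$ a.e. for all $p\in\mathbb{N}$; $\widehat{\mathbb{C}^{\mathcal{D}_0}}=\mathcal{M}/\mathcal{N}$, $\widehat{\mathbb{R}^{\mathcal{D}_0}}$ the classes of real-valued nets, ordered by: nonzero $\widehat{A_\varphi}>0$ iff $A_\varphi>0$ a.e.; $|x+iy|=\sqrt{x^2+y^2}$; $z\approx0$ if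 $|z|<1/n$ for all $n$; $\widehat\rho$ = class of $(R_\varphi)$; valuation $v(0)=\infty$, $v(z)=\sup\{q\in\mathbb{Q}: z/\widehat\rho^{\,q}\approx0\}$; ultra-norm $|z|_v=e^{-v(z)}$; ultra-metric $d(a,b)=|a-b|_v$. The order topology on $\widehat{\mathbb{C}^{\mathcal{D}_0}}$ is the product topology from the order topology of $\widehat{\mathbb{R}^{\mathcal{D}_0}}$ under $\widehat{\mathbb{C}^{\mathcal{D}_0}}=\widehat{\mathbb{R}^{\mathcal{D}_0}}+i\widehat{\mathbb{R}^{\mathcal{D}_0}}$; the metric topology is that of $d$. Ultrapower: ${}^*\mathbb{R}=\mathbb{R}^{\mathcal{D}_0}/\!\sim$, where $(A_\varphi)\sim(B_\varphi)$ iff $A_\varphi=B_\varphi$ a.e.; $\langle A_\varphi\rangle$ denotes the class; operations pointwise; $\langle A_\varphi\rangle>0$ iff $A_\varphi>0$ a.e.; similarly ${}^*\mathbb{C}=\mathbb{C}^{\mathcal{D}_0}/\!\sim$ with $|\langle A_\varphi\rangle|=\langle|A_\varphi|\rangle$; $\mathbb{R}\subset{}^*\mathbb{R}$ via constant nets. $\rho=\langle R_\varphi\rangle$ (a positive infinitesimal). Robinson field: $\mathcal{M}_\rho({}^*\mathbb{C})=\{\zeta\in{}^*\mathbb{C}: |\zeta|\le\rho^{-m}\text{ for some } m\in\mathbb{N}\}$, $\mathcal{N}_\rho({}^*\mathbb{C})=\{\zeta: |\zeta|<\rho^n\text{ for all }n\in\mathbb{N}\}$, ${}^\rho\mathbb{C}=\mathcal{M}_\rho/\mathcal{N}_\rho$,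 $\widehat\zeta$ the class; ${}^\rho\mathbb{R}$ the classes of elements of ${}^*\mathbb{R}$. Valuation on ${}^\rho\mathbb{C}$: $v(0)=\infty$, $v(\widehat\zeta)=\mathrm{st}(\ln|\zeta|/\ln\rho)$ for $\widehat\zeta\neq0$, where $\ln$ acts componentwise on nets and $\mathrm{st}$ is the standard part (the unique real number infinitely close to a finite element of ${}^*\mathbb{R}$); $|z|_v=e^{-v(z)}$, $d_v(a,b)=|a-b|_v$. *)

(* Defs.v *)
From mathcomp Require Import all_boot all_order all_algebra.
From mathcomp Require Import all_classical all_reals all_analysis.
From mathcomp Require Import complex.

Set Implicit Arguments.
Unset Strict Implicit.
Unset Printing Implicit Defensive.

Import Order.TTheory GRing.Theory Num.Theory numFieldNormedType.Exports.
Local Open Scope classical_set_scope.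
Local Open Scope ring_scope.

Record quot (T : Type) (r : T -> T -> Prop) := Quot {
  qset : set T ;
  qset_cls : exists x, qset = [set y | r x y] }.

Definition cls (T : Type) (r : T -> T -> Prop) (x : T) : quot r :=
  @Quot T r [set y | r x y] (ex_intro _ x erefl).

Definition rep (T : Type) (r : T -> T -> Prop) (q : quot r) : T :=
  projT1 (cid (qset_cls q)).

Definition ultrafilter (T : Type) (U : set (set T)) : Prop :=
  [/\ U setT, ~ U set0,
      (forall A B, U A -> U B -> U (A `&` B)),
      (forall A B, A `<=` B -> U A -> U B) &
      (forall A, U A \/ U (~` A))].

Definition free_ultrafilter (T : Type) (U : set (set T)) : Prop :=
  ultrafilter U /\ (forall A, finite_set A -> ~ U A).

(* kappa-good ultrafilter (Keisler) with kappa = c^+, c = card R: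
   for every lambda < c^+ (i.e. card lambda <= card R) and every
   antitone f from the finite subsets of lambda into U there is a
   multiplicative g : finite subsets of lambda -> U refining f. *)
Definition cplus_good (R : Type) (T : Type) (U : set (set T)) : Prop :=
  forall (L : Type) (inj : L -> R), injective inj ->
  forall f : set L -> set T,
    (forall s, finite_set s -> U (f s)) ->
    (forall s t, finite_set s -> finite_set t -> s `<=` t -> f t `<=` f s) ->
  exists g : set L -> set T,
    (forall s, finite_set s -> U (g s) /\ g s `<=` f s) /\
    (forall s t, finite_set s -> finite_set t -> g (s `|` t) = g s `&` g t).

Section TestFunctions.
Variables (R : realType) (d : nat).

Local Notation C := R[i].
Local Notation Rd := 'rV[R]_d.

Definition cabs (z : C) : R := Num.sqrt (complex.Re z ^+ 2 + complex.Im z ^+ 2).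

Definition enorm (x : Rd) : R := Num.sqrt (\sum_(i < d) x 0 i ^+ 2).

Definition ev (i : 'I_d) : Rd := delta_mx 0 i.

Definition pderiv (i : 'I_d) (f : Rd -> R) : Rd -> R :=
  fun x => derive f x (ev i).

Definition mindex := 'I_d -> nat.
Definition mabs (al : mindex) : nat := (\sum_(i < d) al i)%N.
Definition dpow (al : mindex) (f : Rd -> R) : Rd -> R :=
  foldr (fun i g => iter (al i) (pderiv i) g) f (enum 'I_d).

Definition smooth (f : Rd -> R) : Prop :=
  forall al : mindex,
    continuous (dpow al f) /\ (forall i x, derivable (dpow al f) x (ev i)).

Definition testfun (phi : Rd -> C) : Prop :=
  [/\ smooth (fun x => complex.Re (phi x)),
      smooth (fun x => complex.Im (phi x)) &
      exists M : R, forall x, M < enorm x -> phi x = 0].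

Definition D0 := {phi : Rd -> C | testfun phi}.

Definition Rphi (phi : D0) : R :=
  if pselect (forall x, sval phi x = 0) then 1
  else sup [set enorm x | x in [set x | sval phi x <> 0]].

(* Lebesgue integral over R^d, written as iterated one-dimensional
   Lebesgue integrals (Fubini; the integrands below are continuous with
   compact support). *)
Fixpoint iint (k : nat) (g : (nat -> R) -> R) : R :=
  match k with
  | 0 => g (fun _ => 0)
  | k'.+1 => Rintegral (@lebesgue_measure R) setT
               (fun t => iint k' (fun s => g (fun j => if j == k' then t else s j)))
  end.

Definition intRd (f : Rd -> R) : R := iint d (fun s => f (\row_i s i)).

Definition xpow (al : mindex) (x : Rd) : R := \prod_(i < d) x 0 i ^+ al i.

Definition Dn (n : nat) : set D0 :=
  [set phi : D0 |
    (forall x, complex.Im (sval phi x) = 0) /\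
    (forall x, sval phi (- x) = sval phi x) /\
    Rphi phi <= n%:R^-1 /\
    intRd (fun x => complex.Re (sval phi x)) = 1 /\
    [/\ (forall al : mindex, (1 <= mabs al <= n)%N ->
            intRd (fun x => xpow al x * complex.Re (sval phi x)) = 0),
        intRd (fun x => cabs (sval phi x)) <= 1 + n%:R^-1 &
        (forall al : mindex, (mabs al <= n)%N -> forall x,
            `|dpow al (fun y => complex.Re (sval phi y)) x|
              <= Rphi phi ^- (2 * (mabs al + d)))]].

End TestFunctions.

Section Asymptotic.
Variables (R : realType) (d : nat) (U : set (set (D0 R d))).

Local Notation C := R[i].
Local Notation I := (D0 R d).
Local Notation Rp := (@Rphi R d).

Definition moderate (A : I -> C) : Prop :=
  exists m : nat, U [set phi | cabs (A phi) <= Rp phi ^- m].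

Definition negligible (A : I -> C) : Prop :=
  forall p : nat, U [set phi | cabs (A phi) < Rp phi ^+ p].

Definition Mnet := {A : I -> C | moderate A}.
Definition hrel (A B : Mnet) : Prop := negligible (fun phi => sval A phi - sval B phi).
Definition hatC := quot hrel.

Definition hcls (A : I -> C) (hA : moderate A) : hatC := cls hrel (exist _ A hA).
Definition hrep (x : hatC) : I -> C := sval (rep x).

(* class of a net, with a fallback value for non-moderate nets
   (never used: all nets below are moderate in the situation of the theorem) *)
Definition hmk (A : I -> C) (dflt : hatC) : hatC :=
  match pselect (moderate A) with left h => hcls h | right _ => dflt end.

Definition hadd (x y : hatC) : hatC := hmk (fun phi => hrep x phi + hrep y phi) x.
Definition hmul (x y : hatC) : hatC := hmk (fun phi => hrep x phi * hrep y phi) x.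
Definition hsub (x y : hatC) : hatC := hmk (fun phi => hrep x phi - hrep y phi) x.
Definition hre (x : hatC) : hatC := hmk (fun phi => (complex.Re (hrep x phi))%:C%C) x.
Definition him (x : hatC) : hatC := hmk (fun phi => (complex.Im (hrep x phi))%:C%C) x.

Definition hreal (x : hatC) : Prop :=
  exists A (hA : moderate A), (forall phi, complex.Im (A phi) = 0) /\ x = hcls hA.

Definition hnz (x : hatC) : Prop := ~ negligible (hrep x).

Definition hpos (x : hatC) : Prop :=
  hnz x /\ exists A (hA : moderate A), (forall phi, complex.Im (A phi) = 0) /\
             x = hcls hA /\ U [set phi | 0 < complex.Re (A phi)].
Definition hlt (x y : hatC) : Prop := [/\ hreal x, hreal y & hpos (hsub y x)].

Definition hltN (A B : I -> C) : Prop :=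
  ~ negligible (fun phi => B phi - A phi) /\
  U [set phi | 0 < complex.Re (B phi - A phi)].

Definition happrox0N (A : I -> C) : Prop :=
  forall n : nat, hltN (fun phi => (cabs (A phi))%:C%C) (fun _ => (n.+1%:R^-1)%:C%C).

Definition hval (z : hatC) : \bar R :=
  if pselect (negligible (hrep z)) then +oo%E
  else ereal_sup [set ((ratr q : R)%:E) | q in
         [set q : rat | happrox0N (fun phi => hrep z phi / (powR (Rp phi) (ratr q))%:C%C)]].

Definition eexpN (v : \bar R) : R :=
  match v with EFin r => expR (- r) | _ => 0 end.

Definition hnorm (z : hatC) : R := eexpN (hval z).
Definition hdist (a b : hatC) : R := hnorm (hsub a b).

(* order topology on \hat R; basic open sets are the open intervals and
   rays (a,b), (a,+oo), (-oo,b), and the whole line *)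
Definition hinterval (lo hi : option hatC) (x : hatC) : Prop :=
  [/\ hreal x,
      (if lo is Some a then hlt a x else True) &
      (if hi is Some b then hlt x b else True)].

Definition ord_open (V : set hatC) : Prop :=
  V `<=` hreal /\
  forall x, V x -> exists lo hi, hinterval lo hi x /\ hinterval lo hi `<=` V.

Definition order_open (S : set hatC) : Prop :=
  forall z, S z -> exists V W, [/\ ord_open V, ord_open W, V (hre z), W (him z) &
     forall w, V (hre w) -> W (him w) -> S w].

Definition metric_open (S : set hatC) : Prop :=
  forall z, S z -> exists e : R, 0 < e /\ forall w, hdist z w < e -> S w.

Definition aeq (V : Type) (A B : I -> V) : Prop := U [set phi | A phi = B phi].

Definition starC := quot (@aeq C).
Definition starR := quot (@aeq R).
Definition sC (A : I -> C) : starC := cls (@aeq C) A.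
Definition sR (A : I -> R) : starR := cls (@aeq R) A.

Definition spos (x : starR) : Prop := U [set phi | 0 < rep x phi].
Definition ssubR (x y : starR) : starR := sR (fun phi => rep x phi - rep y phi).
Definition sltR (x y : starR) : Prop := spos (ssubR y x).
Definition sleR (x y : starR) : Prop := sltR x y \/ x = y.
Definition sabs (z : starC) : starR := sR (fun phi => cabs (rep z phi)).
Definition sabsR (x : starR) : starR := sR (fun phi => `|rep x phi|).
Definition sexpz (x : starR) (k : int) : starR := sR (fun phi => rep x phi ^ k).
Definition sln (x : starR) : starR := sR (fun phi => ln (rep x phi)).
Definition sdivR (x y : starR) : starR := sR (fun phi => rep x phi / rep y phi).
Definition sconst (r : R) : starR := sR (fun _ => r).
Definition ssubC (a b : starC) : starC := sC (fun phi => rep a phi - rep b phi).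
Definition embR (x : starR) : starC := sC (fun phi => (rep x phi)%:C%C).

Definition rho : starR := sR Rp.

Definition Mrho (z : starC) : Prop :=
  exists m : nat, sleR (sabs z) (sexpz rho (- (m%:Z))).
Definition Nrho (z : starC) : Prop :=
  forall n : nat, sltR (sabs z) (sexpz rho (n%:Z)).

Definition Mstar := {z : starC | Mrho z}.
Definition rrel (a b : Mstar) : Prop := Nrho (ssubC (sval a) (sval b)).
Definition rhoC := quot rrel.

Definition rcls (z : starC) (hz : Mrho z) : rhoC := cls rrel (exist _ z hz).
Definition rrep (x : rhoC) : starC := sval (rep x).
Definition rmk (z : starC) (dflt : rhoC) : rhoC :=
  match pselect (Mrho z) with left h => rcls h | right _ => dflt end.

Definition radd (x y : rhoC) : rhoC :=
  rmk (sC (fun phi => rep (rrep x) phi + rep (rrep y) phi)) x.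
Definition rmul (x y : rhoC) : rhoC :=
  rmk (sC (fun phi => rep (rrep x) phi * rep (rrep y) phi)) x.
Definition rsub (x y : rhoC) : rhoC := rmk (ssubC (rrep x) (rrep y)) x.

Definition rreal (z : rhoC) : Prop :=
  exists (x : starR) (h : Mrho (embR x)), z = rcls h.

Definition sinf (x : starR) : Prop :=
  forall n : nat, sltR (sabsR x) (sconst (n.+1%:R^-1)).
Definition st (x : starR) : R := xget 0 [set r : R | sinf (ssubR x (sconst r))].

Definition rval (z : rhoC) : \bar R :=
  if pselect (Nrho (rrep z)) then +oo%E
  else (st (sdivR (sln (sabs (rrep z))) (sln rho)))%:E.

Definition rnorm (z : rhoC) : R := eexpN (rval z).
Definition rdist (a b : rhoC) : R := rnorm (rsub a b).

End Asymptotic.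

(* Main.v *)
Require Import Defs.
From mathcomp Require Import all_boot all_order all_algebra.
From mathcomp Require Import all_classical all_reals all_analysis.
From mathcomp Require Import complex Rstruct.
From mathcomp Require Import lra.
Import Order.TTheory GRing.Theory Num.Theory.
Set Implicit Arguments.
Unset Strict Implicit.
Unset Printing Implicit Defensive.
Local Open Scope classical_set_scope.
Local Open Scope ring_scope.

Section QuotLemmas.
Variables (T : Type) (r : T -> T -> Prop).

Lemma rep_spec (q : quot r) : qset q = [set y | r (rep q) y].
Proof. by rewrite /rep; case: cid. Qed.

Lemma quotP (q1 q2 : quot r) : qset q1 = qset q2 -> q1 = q2.
Proof.
destruct q1 as [s1 h1]; destruct q2 as [s2 h2]; simpl => e; subst s2; congr Quot; exact: Prop_irrelevance.
Qed.

Lemma cls_rep q : cls r (rep q) = q.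
Proof. by apply: quotP; rewrite [RHS]rep_spec. Qed.

Hypotheses (rR : forall x, r x x) (rS : forall x y, r x y -> r y x)
  (rT : forall x y z, r x y -> r y z -> r x z).

Lemma rep_cls x : r x (rep (cls r x)).
Proof.
have e := rep_spec (cls r x); have : qset (cls r x) x by exact: rR.
by rewrite e /= => H; apply: rS.
Qed.

Lemma eq_cls x y : cls r x = cls r y <-> r x y.
Proof.
split.
  move=> e; have : qset (cls r y) y by exact: rR.
  by rewrite -e.
move=> rxy; apply: quotP => /=; apply/seteqP; split => z h.
  exact (rT (rS rxy) h).
exact (rT rxy h).
Qed.
End QuotLemmas.

Section Main.
Variables (R : realType) (d : nat) (U : set (set (D0 R d))).
Hypothesis hU : ultrafilter U.
Hypothesis hDn : forall n : nat, U (Dn n.+1).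
Hypothesis hd : (0 < d)%N.

Local Notation C := R[i].
Local Notation I := (D0 R d).
Local Notation Rp := (@Rphi R d).

Definition ae (P : I -> Prop) := U [set phi | P phi].

Lemma ae_T (P : I -> Prop) : (forall phi, P phi) -> ae P.
Proof.
case: hU => hT _ _ hm _ H; apply: hm hT => x _; exact: H.
Qed.

Lemma ae_mono (P Q : I -> Prop) : ae P -> (forall phi, P phi -> Q phi) -> ae Q.
Proof. case: hU => _ _ _ hm _ hP H; exact: hm hP => x /H. Qed.

Lemma ae2 (P Q S : I -> Prop) : ae P -> ae Q ->
  (forall phi, P phi -> Q phi -> S phi) -> ae S.
Proof.
case: hU => _ _ hI hm _ hP hQ H; apply: hm (hI _ _ hP hQ) => x [].
exact: H.
Qed.

Lemma ae3 (P Q S W : I -> Prop) : ae P -> ae Q -> ae S ->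
  (forall phi, P phi -> Q phi -> S phi -> W phi) -> ae W.
Proof.
move=> hP hQ hS H.
have hPQ : ae (fun phi => P phi /\ Q phi) by apply: ae2 hP hQ _.
apply: (@ae2 (fun phi => P phi /\ Q phi) S W hPQ hS) => phi [].
exact: H.
Qed.

Lemma ae4 (P Q S V W : I -> Prop) : ae P -> ae Q -> ae S -> ae V ->
  (forall phi, P phi -> Q phi -> S phi -> V phi -> W phi) -> ae W.
Proof.
move=> hP hQ hS hV H.
have hPQ : ae (fun phi => P phi /\ Q phi) by apply: ae2 hP hQ _.
apply: (@ae3 (fun phi => P phi /\ Q phi) S V W hPQ hS hV) => phi [].
exact: H.
Qed.

Lemma ae_F (P : I -> Prop) : ae P -> ae (fun phi => ~ P phi) -> False.
Proof.
case: hU => _ h0 hI _ _ hP hN; apply: h0.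
have -> : set0 = [set phi | P phi] `&` [set phi | ~ P phi].
  by apply/seteqP; split => x //= [].
exact: hI.
Qed.

Lemma ae_em (P : I -> Prop) : ~ ae P -> ae (fun phi => ~ P phi).
Proof.
move=> nP; case: hU => _ _ _ _ /(_ [set phi | P phi]) [h|h] //.
Qed.

Lemma ae_case (P : I -> Prop) : ae P \/ ae (fun phi => ~ P phi).
Proof. by case: hU => _ _ _ _ hem; apply: hem. Qed.

Lemma ae_aeq V (A B : I -> V) : aeq U A B <-> ae (fun phi => A phi = B phi).
Proof. by []. Qed.


Lemma cabsE (z : C) : cabs z = Normc.normc z.
Proof. by case: z. Qed.

Lemma cabs_ge0 (z : C) : 0 <= cabs z.
Proof. exact: sqrtr_ge0. Qed.

Lemma cabsD (z w : C) : cabs (z + w) <= cabs z + cabs w.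
Proof. rewrite !cabsE; exact: le_normcD. Qed.

Lemma cabsM (z w : C) : cabs (z * w) = cabs z * cabs w.
Proof. rewrite !cabsE; exact: Normc.normcM. Qed.

Lemma cabsV (z : C) : cabs (z^-1) = (cabs z)^-1.
Proof. rewrite !cabsE; exact: Normc.normcV. Qed.

Lemma cabsN (z : C) : cabs (- z) = cabs z.
Proof. rewrite !cabsE; exact: normcN. Qed.

Lemma cabsB (z w : C) : cabs (z - w) = cabs (w - z).
Proof. by rewrite -cabsN opprB. Qed.

Lemma cabs0 : cabs (0 : C) = 0.
Proof. rewrite cabsE; exact: Normc.normc0. Qed.

Lemma cabs_eq0 (z : C) : cabs z = 0 -> z = 0.
Proof. rewrite cabsE; exact: Normc.eq0_normc. Qed.

Lemma cabsR (x : R) : cabs (x%:C)%C = `|x|.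
Proof. by rewrite /cabs /= expr0n /= addr0 sqrtr_sqr. Qed.

Lemma cabs_Re (z : C) : `|complex.Re z| <= cabs z.
Proof.
rewrite -sqrtr_sqr /cabs; apply: ler_wsqrtr.
by rewrite lerDl sqr_ge0.
Qed.

Lemma cabs_Im (z : C) : `|complex.Im z| <= cabs z.
Proof.
rewrite -sqrtr_sqr /cabs; apply: ler_wsqrtr.
by rewrite lerDr sqr_ge0.
Qed.

Lemma cabs_ReIm (z : C) : cabs z <= `|complex.Re z| + `|complex.Im z|.
Proof.
case: z => a b; rewrite /cabs /=.
have ha : `|a| ^+ 2 = a ^+ 2 by rewrite real_normK ?num_real.
have hb : `|b| ^+ 2 = b ^+ 2 by rewrite real_normK ?num_real.
have h : a ^+ 2 + b ^+ 2 <= (`|a| + `|b|) ^+ 2.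
  rewrite sqrrD ha hb; have := mulr_ge0 (normr_ge0 a) (normr_ge0 b).
  set t := `|a| * `|b|; move=> ht; lra.
by apply: (le_trans (ler_wsqrtr h)); rewrite sqrtr_sqr ger0_norm // addr_ge0.
Qed.

Lemma dpow0 (f : 'rV[R]_d -> R) : dpow (fun _ : 'I_d => 0%N) f = f.
Proof. by rewrite /dpow; elim: (enum 'I_d) => //= i s ->. Qed.

Lemma mabs0 : mabs (fun _ : 'I_d => 0%N) = 0%N.
Proof. by rewrite /mabs big1. Qed.

Lemma Rp_ge0 (phi : I) : 0 <= Rp phi.
Proof.
rewrite /Rphi; case: pselect => [H|h]; first exact: ler01.
have [x hx] : exists x, sval phi x <> 0.
  apply: contrapT => hh; apply: h => x; apply: contrapT => hx; apply: hh; by exists x.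
have hs : has_sup [set enorm x | x in [set x | sval phi x <> 0]].
  split; first by exists (enorm x), x.
  case: (svalP phi) => _ _ [M hM]; exists M => _ [y hy <-].
  by rewrite leNgt; apply/negP => /hM.
apply: (le_trans _ (sup_upper_bound hs _)); last by exists x.
exact: sqrtr_ge0.
Qed.

Lemma Rp_gt0_Dn (phi : I) : Dn 1 phi -> 0 < Rp phi.
Proof.
move=> [hIm [_ [_ [_ [_ _ hder]]]]].
rewrite lt_def Rp_ge0 andbT; apply/eqP => h0.
have hz : forall x, sval phi x = 0.
  move=> x; have := hder (fun _ => 0%N); rewrite mabs0 => /(_ isT x).
  rewrite dpow0 h0 add0n expr0n muln_eq0 /= (negbTE (lt0n_neq0 hd)) invr0.
  rewrite normr_le0 => /eqP hre.
  move: (hIm x) hre; case: (sval phi x) => a b /= -> ->; by [].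
move: h0; rewrite /Rphi; destruct pselect as [Hz|hn] => h1.
  by move: h1; apply/eqP; exact: oner_neq0.
exact: (hn hz).
Qed.

Lemma aeDn n : ae (fun phi => Dn n.+1 phi).
Proof. exact: hDn. Qed.

Lemma Rp_pos : ae (fun phi => 0 < Rp phi).
Proof. 
apply: (ae_mono (aeDn 0)) => phi; exact: Rp_gt0_Dn.
Qed.

Lemma Rp_lt (c : R) : 0 < c -> ae (fun phi => Rp phi < c).
Proof.
move=> c0; set n := Num.Def.archi_bound c^-1.
apply: (ae_mono (aeDn n)) => phi [_ [_ [hR _]]].
apply: (le_lt_trans hR); rewrite invf_plt ?posrE //.
apply: (lt_le_trans (archi_boundP _)); first by rewrite invr_ge0 ltW.
by rewrite ler_nat.
Qed.

Lemma Rp_in (c : R) : 0 < c -> ae (fun phi => 0 < Rp phi < c).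
Proof. by move=> c0; apply: (ae2 Rp_pos (Rp_lt c0)) => phi h1 h2; apply/andP. Qed.


Definition negl (A : I -> C) := Defs.negligible U A.
Definition modr (A : I -> C) := moderate U A.

Lemma Rp_half : ae (fun phi => 0 < Rp phi < 2^-1).
Proof. apply: Rp_in; by rewrite invr_gt0 ltr0n. Qed.

Lemma pow_step (r : R) p : 0 < r -> r <= 2^-1 -> 2 * r ^+ p.+1 <= r ^+ p.
Proof.
move=> r0 rh; rewrite exprS mulrA -[X in _ <= X]mul1r ler_pM2r ?exprn_gt0 //.
lra.
Qed.

Lemma pow_stepS (r : R) p : 0 < r -> r <= 2^-1 -> r ^+ p.+1 < r ^+ p.
Proof.
move=> r0 rh; have := pow_step p r0 rh; have := exprn_gt0 p.+1 r0; lra.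
Qed.

Lemma neglE A : negl A <-> forall p : nat, ae (fun phi => cabs (A phi) <= Rp phi ^+ p).
Proof.
split=> h p.
  by apply: (ae_mono (h p)) => phi /ltW.
apply: (ae2 (h p.+1) Rp_half) => phi h1 /andP[h2 h3].
exact: (le_lt_trans h1 (pow_stepS _ h2 (ltW h3))).
Qed.

Lemma negl_le (A B : I -> C) : negl B ->
  ae (fun phi => cabs (A phi) <= cabs (B phi)) -> negl A.
Proof.
move=> hB h p; apply: (ae2 (hB p) h) => phi h1 h2; exact: le_lt_trans h2 h1.
Qed.

Lemma negl_eq (A B : I -> C) : negl B -> ae (fun phi => A phi = B phi) -> negl A.
Proof. by move=> hB h; apply: (negl_le hB); apply: (ae_mono h) => phi ->. Qed.

Lemma negl_add (A B : I -> C) : negl A -> negl B -> negl (fun phi => A phi + B phi).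
Proof.
move=> hA hB; apply/neglE => p.
apply: (ae3 (hA p.+1) (hB p.+1) Rp_half) => phi h1 h2 /andP[h3 h4].
have := cabsD (A phi) (B phi); have := pow_step p h3 (ltW h4); lra.
Qed.

Lemma negl_opp (A : I -> C) : negl A -> negl (fun phi => - A phi).
Proof. by move=> hA p; apply: (ae_mono (hA p)) => phi; rewrite cabsN. Qed.

Lemma negl_sub (A B : I -> C) : negl A -> negl B -> negl (fun phi => A phi - B phi).
Proof. by move=> hA hB; apply: negl_add hA (negl_opp hB). Qed.

Lemma negl0 : negl (fun _ => 0).
Proof.
by move=> p; apply: (ae_mono Rp_pos) => phi h; rewrite cabs0 exprn_gt0.
Qed.

Lemma negl_mulM (A B : I -> C) : modr A -> negl B -> negl (fun phi => A phi * B phi).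
Proof.
move=> [m hm] hB; apply/neglE => p.
apply: (ae3 hm (hB (p + m)%N) Rp_pos) => phi h1 h2 h3.
rewrite cabsM; apply: (le_trans (ler_pM (cabs_ge0 _) (cabs_ge0 _) h1 (ltW h2))).
rewrite exprD mulrCA -exprVn -exprMn mulVf ?expr1n ?mulr1 //.
by rewrite gt_eqF.
Qed.

Lemma negl_mulM' (A B : I -> C) : negl A -> modr B -> negl (fun phi => A phi * B phi).
Proof.
move=> hA hB; apply: (negl_eq (negl_mulM hB hA)); apply: ae_T => phi; exact: mulrC.
Qed.

Lemma modE A : modr A <-> exists m : nat,
  ae (fun phi => cabs (A phi) <= (Rp phi)^-1 ^+ m).
Proof.
split=> -[m hm]; exists m; apply: (ae_mono hm) => phi; by rewrite exprVn.
Qed.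

Lemma Rpinv_ge2 : ae (fun phi => 2 <= (Rp phi)^-1 /\ 0 < Rp phi).
Proof.
apply: (ae_mono Rp_half) => phi /andP[h1 h2]; split => //.
rewrite -[2]invrK lef_pV2 ?posrE ?invr_gt0 //; try lra; exact: ltW.
Qed.

Lemma pow_mono (t : R) (m n : nat) : 1 <= t -> (m <= n)%N -> t ^+ m <= t ^+ n.
Proof. move=> t1 mn; exact: ler_weXn2l. Qed.

Lemma mod_le (A B : I -> C) : modr B ->
  ae (fun phi => cabs (A phi) <= cabs (B phi)) -> modr A.
Proof.
move=> [m hm] h; exists m; apply: (ae2 hm h) => phi h1 h2; exact: le_trans h2 h1.
Qed.

Lemma mod_eq (A B : I -> C) : modr B -> ae (fun phi => A phi = B phi) -> modr A.
Proof. by move=> hB h; apply: (mod_le hB); apply: (ae_mono h) => phi ->. Qed.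

Lemma mod_add (A B : I -> C) : modr A -> modr B -> modr (fun phi => A phi + B phi).
Proof.
move=> /modE[m hm] /modE[k hk]; apply/modE; exists (m + k).+1.
apply: (ae3 hm hk Rpinv_ge2) => phi h1 h2 [h3 _].
have t1 : 1 <= (Rp phi)^-1 by lra.
have e1 := pow_mono t1 (leq_addr k m).
have e2 := pow_mono t1 (leq_addl m k).
have := cabsD (A phi) (B phi); rewrite exprS.
have : 0 <= (Rp phi)^-1 ^+ (m + k) by apply: exprn_ge0; lra.
move=> h0; nra.
Qed.

Lemma mod_opp (A : I -> C) : modr A -> modr (fun phi => - A phi).
Proof. by move=> [m hm]; exists m; apply: (ae_mono hm) => phi; rewrite cabsN. Qed.

Lemma mod_sub (A B : I -> C) : modr A -> modr B -> modr (fun phi => A phi - B phi).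
Proof. by move=> hA hB; apply: mod_add hA (mod_opp hB). Qed.

Lemma mod_mul (A B : I -> C) : modr A -> modr B -> modr (fun phi => A phi * B phi).
Proof.
move=> /modE[m hm] /modE[k hk]; apply/modE; exists (m + k)%N.
apply: (ae2 hm hk) => phi h1 h2; rewrite cabsM exprD.
exact: ler_pM (cabs_ge0 _) (cabs_ge0 _) h1 h2.
Qed.

Lemma mod_negl (A : I -> C) : negl A -> modr A.
Proof. by move=> hA; exists 0%N; apply: (ae_mono (hA 0%N)) => phi /ltW; rewrite !expr0 invr1. Qed.

Lemma mod_Re (A : I -> C) : modr A -> modr (fun phi => (complex.Re (A phi))%:C%C).
Proof. move=> hA; apply: (mod_le hA); apply: ae_T => phi; rewrite cabsR; exact: cabs_Re. Qed.

Lemma mod_Im (A : I -> C) : modr A -> modr (fun phi => (complex.Im (A phi))%:C%C).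
Proof. move=> hA; apply: (mod_le hA); apply: ae_T => phi; rewrite cabsR; exact: cabs_Im. Qed.

Lemma mod_Rpow (k : nat) : modr (fun phi => (Rp phi ^+ k)%:C%C).
Proof.
exists 0%N; apply: (ae_mono Rp_half) => phi /andP[h1 h2].
rewrite cabsR expr0 invr1 ger0_norm.
  apply: exprn_ile1; lra.
apply: exprn_ge0; lra.
Qed.

Definition heq (A B : I -> C) := negl (fun phi => A phi - B phi).

Lemma heq_refl A : heq A A.
Proof. by apply: (negl_eq negl0); apply: ae_T => phi; rewrite subrr. Qed.

Lemma heq_sym A B : heq A B -> heq B A.
Proof.
move=> h; apply: (negl_eq (negl_opp h)); apply: ae_T => phi; by rewrite opprB.
Qed.

Lemma heq_trans A B D : heq A B -> heq B D -> heq A D.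
Proof.
move=> h1 h2; apply: (negl_eq (negl_add h1 h2)); apply: ae_T => phi.
by rewrite addrA subrK.
Qed.

Lemma heq_ae A B : ae (fun phi => A phi = B phi) -> heq A B.
Proof. by move=> h; apply: (negl_eq negl0); apply: (ae_mono h) => phi ->; rewrite subrr. Qed.

Lemma heq_add A B A' B' : heq A A' -> heq B B' ->
  heq (fun phi => A phi + B phi) (fun phi => A' phi + B' phi).
Proof.
move=> h1 h2; apply: (negl_eq (negl_add h1 h2)); apply: ae_T => phi.
by rewrite opprD addrACA.
Qed.

Lemma heq_opp A A' : heq A A' -> heq (fun phi => - A phi) (fun phi => - A' phi).
Proof.
move=> h1; apply: (negl_eq (negl_opp h1)); apply: ae_T => phi; by rewrite opprB opprK addrC.
Qed.

Lemma heq_sub A B A' B' : heq A A' -> heq B B' ->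
  heq (fun phi => A phi - B phi) (fun phi => A' phi - B' phi).
Proof. move=> h1 h2; exact: heq_add h1 (heq_opp h2). Qed.

Lemma heq_mul A B A' B' : modr A -> modr B' -> heq A A' -> heq B B' ->
  heq (fun phi => A phi * B phi) (fun phi => A' phi * B' phi).
Proof.
move=> mA mB h1 h2.
apply: (negl_eq (negl_add (negl_mulM mA h2) (negl_mulM' h1 mB))); apply: ae_T => phi.
by rewrite mulrBr mulrBl addrA subrK.
Qed.

Lemma heq_Re A A' : heq A A' ->
  heq (fun phi => (complex.Re (A phi))%:C%C) (fun phi => (complex.Re (A' phi))%:C%C).
Proof.
move=> h; apply: (negl_le h); apply: ae_T => phi.
by rewrite -rmorphB -raddfB /= cabsR cabs_Re.
Qed.

Lemma heq_Im A A' : heq A A' ->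
  heq (fun phi => (complex.Im (A phi))%:C%C) (fun phi => (complex.Im (A' phi))%:C%C).
Proof.
move=> h; apply: (negl_le h); apply: ae_T => phi.
by rewrite -rmorphB -raddfB /= cabsR cabs_Im.
Qed.

Lemma mod_heq A B : modr B -> heq A B -> modr A.
Proof.
move=> hB h; apply: (mod_eq (mod_add (mod_negl h) hB)); apply: ae_T => phi.
by rewrite subrK.
Qed.

Lemma negl_heq A B : negl B -> heq A B -> negl A.
Proof.
move=> hB h; apply: (negl_eq (negl_add h hB)); apply: ae_T => phi; by rewrite subrK.
Qed.


Lemma hrel_refl (A : Mnet U) : hrel A A.
Proof. exact: heq_refl. Qed.
Lemma hrel_sym (A B : Mnet U) : hrel A B -> hrel B A.
Proof. exact: heq_sym. Qed.
Lemma hrel_trans (A B D : Mnet U) : hrel A B -> hrel B D -> hrel A D.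
Proof. exact: heq_trans. Qed.

Lemma hrep_mod (x : hatC U) : modr (hrep x).
Proof. exact: (svalP (rep x)). Qed.

Lemma hrep_hcls A (hA : moderate U A) : heq (hrep (hcls hA)) A.
Proof.
apply: heq_sym; exact: (rep_cls hrel_refl hrel_sym (exist _ A hA)).
Qed.

Lemma hcls_eq A B (hA : moderate U A) (hB : moderate U B) :
  hcls hA = hcls hB <-> heq A B.
Proof. exact: (eq_cls hrel_refl hrel_sym hrel_trans (exist _ A hA) (exist _ B hB)). Qed.

Lemma hcls_hrep (x : hatC U) : hcls (hrep_mod x) = x.
Proof.
rewrite /hcls; have -> : exist (moderate U) (hrep x) (hrep_mod x) = rep x.
  move: (hrep_mod x); rewrite /hrep; case: (rep x) => a ha h /=.
  congr exist; exact: Prop_irrelevance.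
exact: cls_rep.
Qed.

Lemma hatC_eq (x y : hatC U) : x = y <-> heq (hrep x) (hrep y).
Proof.
rewrite -{1}(hcls_hrep x) -{1}(hcls_hrep y); exact: hcls_eq.
Qed.

Lemma hatC_cls (x : hatC U) A (hA : moderate U A) : x = hcls hA <-> heq (hrep x) A.
Proof. rewrite -{1}(hcls_hrep x); exact: hcls_eq. Qed.

Lemma hmk_eq F (dflt : hatC U) (hF : moderate U F) : hmk F dflt = hcls hF.
Proof.
rewrite /hmk; case: pselect => [h|//]; congr hcls; exact: Prop_irrelevance.
Qed.

Lemma hrep_hmk F (dflt : hatC U) : modr F -> heq (hrep (hmk F dflt)) F.
Proof. move=> hF; rewrite (hmk_eq _ hF); exact: hrep_hcls. Qed.

Lemma aeq_refl V (A : I -> V) : aeq U A A.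
Proof. exact: ae_T. Qed.
Lemma aeq_sym V (A B : I -> V) : aeq U A B -> aeq U B A.
Proof. by move=> h; apply: (ae_mono h) => phi ->. Qed.
Lemma aeq_trans V (A B D : I -> V) : aeq U A B -> aeq U B D -> aeq U A D.
Proof. by move=> h1 h2; apply: (ae2 h1 h2) => phi -> ->. Qed.

Lemma rep_ae V (f : I -> V) : ae (fun phi => rep (cls (@aeq _ _ U V) f) phi = f phi).
Proof. apply: aeq_sym; exact: (rep_cls (@aeq_refl V) (@aeq_sym V) f). Qed.

Lemma cls_aeq V (f g : I -> V) : cls (@aeq _ _ U V) f = cls (@aeq _ _ U V) g <-> ae (fun phi => f phi = g phi).
Proof. exact: (eq_cls (@aeq_refl V) (@aeq_sym V) (@aeq_trans V)). Qed.

Lemma rho_E : ae (fun phi => rep (rho U) phi = Rp phi).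
Proof. exact: rep_ae. Qed.

Lemma sltR_E (x y : starR U) : sltR x y <-> ae (fun phi => rep x phi < rep y phi).
Proof.
rewrite /sltR /spos /ssubR /sR; split => h.
  apply: (ae2 h (rep_ae (fun phi => rep y phi - rep x phi))) => phi h1 h2.
  by rewrite -subr_gt0 -h2.
apply: (ae2 h (rep_ae (fun phi => rep y phi - rep x phi))) => phi h1 ->.
by rewrite subr_gt0.
Qed.

Lemma starR_eq (x y : starR U) : x = y <-> ae (fun phi => rep x phi = rep y phi).
Proof.
rewrite -{1}(cls_rep x) -{1}(cls_rep y); exact: cls_aeq.
Qed.

Lemma sleR_E (x y : starR U) : sleR x y <-> ae (fun phi => rep x phi <= rep y phi).
Proof.
split.
  case=> [/sltR_E h|->]; first by apply: (ae_mono h) => phi /ltW.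
  by apply: ae_T.
move=> h; case: (ae_case (fun phi => rep x phi < rep y phi)) => h1.
  by left; apply/sltR_E.
right; apply/starR_eq; apply: (ae2 h h1) => phi h2 h3.
by apply/eqP; rewrite eq_le h2 /= leNgt; apply/negP.
Qed.

Lemma Mrho_E (z : starC U) : Mrho z <-> modr (rep z).
Proof.
split=> -[m hm]; exists m.
  move/sleR_E: hm => hm.
  apply: (ae4 hm (rep_ae (fun phi => cabs (rep z phi)))
     (rep_ae (fun phi => rep (rho U) phi ^ (- (m%:Z)))) rho_E) => phi h1 h2 h3 h4.
  by move: h1; rewrite h2 h3 h4 -exprnN.
apply/sleR_E.
apply: (ae4 hm (rep_ae (fun phi => cabs (rep z phi)))
     (rep_ae (fun phi => rep (rho U) phi ^ (- (m%:Z)))) rho_E) => phi h1 h2 h3 h4.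
by rewrite /sabs /sexpz /sR h2 h3 h4 -exprnN.
Qed.

Lemma Nrho_E (z : starC U) : Nrho z <-> negl (rep z).
Proof.
split=> h n.
  move/sltR_E: (h n) => hn.
  apply: (ae4 hn (rep_ae (fun phi => cabs (rep z phi)))
     (rep_ae (fun phi => rep (rho U) phi ^ (n%:Z))) rho_E) => phi h1 h2 h3 h4.
  by move: h1; rewrite h2 h3 h4.
apply/sltR_E.
apply: (ae4 (h n) (rep_ae (fun phi => cabs (rep z phi)))
     (rep_ae (fun phi => rep (rho U) phi ^ (n%:Z))) rho_E) => phi h1 h2 h3 h4.
by rewrite /sabs /sexpz /sR h2 h3 h4.
Qed.

Lemma sC_rep (A : I -> C) : ae (fun phi => rep (sC U A) phi = A phi).
Proof. exact: rep_ae. Qed.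

Lemma part_i (A : I -> C) : moderate U A <-> Mrho (sC U A).
Proof.
rewrite Mrho_E; split => h.
  exact: (mod_eq h (sC_rep A)).
apply: (mod_eq h); apply: aeq_sym; exact: sC_rep.
Qed.

Lemma Nrho_sC (A : I -> C) : Nrho (sC U A) <-> negl A.
Proof.
rewrite Nrho_E; split => h.
  apply: (negl_eq h); apply: aeq_sym; exact: sC_rep.
exact: (negl_eq h (sC_rep A)).
Qed.


Lemma heq_sC (A : I -> C) : heq (rep (sC U A)) A.
Proof. exact: heq_ae (sC_rep A). Qed.

Lemma Nrho_sub (z w : starC U) : Nrho (ssubC z w) <-> heq (rep z) (rep w).
Proof. exact: (Nrho_sC (fun phi => rep z phi - rep w phi)). Qed.

Lemma rrel_refl (a : Mstar U) : rrel a a.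
Proof. apply/Nrho_sub; exact: heq_refl. Qed.
Lemma rrel_sym (a b : Mstar U) : rrel a b -> rrel b a.
Proof. move=> /Nrho_sub h; apply/Nrho_sub; exact: heq_sym. Qed.
Lemma rrel_trans (a b e : Mstar U) : rrel a b -> rrel b e -> rrel a e.
Proof. move=> /Nrho_sub h1 /Nrho_sub h2; apply/Nrho_sub; exact: heq_trans h1 h2. Qed.

Lemma rrep_M (x : rhoC U) : Mrho (rrep x).
Proof. exact: (svalP (rep x)). Qed.

Lemma rrep_mod (x : rhoC U) : modr (rep (rrep x)).
Proof. exact: ((Mrho_E _).1 (rrep_M x)). Qed.

Lemma rcls_eq (z w : starC U) (hz : Mrho z) (hw : Mrho w) :
  rcls hz = rcls hw <-> heq (rep z) (rep w).
Proof.
rewrite (eq_cls rrel_refl rrel_sym rrel_trans (exist _ z hz) (exist _ w hw)).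
exact: Nrho_sub.
Qed.

Lemma rcls_rrep (x : rhoC U) : rcls (rrep_M x) = x.
Proof.
rewrite /rcls; have -> : exist (@Mrho _ _ U) (rrep x) (rrep_M x) = rep x.
  move: (rrep_M x); rewrite /rrep; case: (rep x) => a ha h /=.
  congr exist; exact: Prop_irrelevance.
exact: cls_rep.
Qed.

Lemma rhoC_eq (x y : rhoC U) : x = y <-> heq (rep (rrep x)) (rep (rrep y)).
Proof. rewrite -{1}(rcls_rrep x) -{1}(rcls_rrep y); exact: rcls_eq. Qed.

Lemma rrep_rcls (z : starC U) (hz : Mrho z) : heq (rep (rrep (rcls hz))) (rep z).
Proof. rewrite -(rcls_eq (rrep_M _) hz); exact: rcls_rrep. Qed.

Lemma rmk_eq (z : starC U) (dflt : rhoC U) (hz : Mrho z) : rmk z dflt = rcls hz.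
Proof.
rewrite /rmk; case: pselect => [h|//]; congr rcls; exact: Prop_irrelevance.
Qed.

Definition Phi (x : hatC U) : rhoC U := rcls ((part_i (hrep x)).1 (hrep_mod x)).

Lemma Phi_rep x : heq (rep (rrep (Phi x))) (hrep x).
Proof. apply: heq_trans (rrep_rcls _) _; exact: heq_sC. Qed.

Lemma Phi_hcls A (hA : moderate U A) (hM : Mrho (sC U A)) : Phi (hcls hA) = rcls hM.
Proof.
rewrite /Phi rcls_eq; apply: heq_trans (heq_sC _) _.
apply: heq_trans (hrep_hcls hA) _; exact: heq_sym (heq_sC A).
Qed.

Definition Psi (z : rhoC U) : hatC U := hcls (rrep_mod z).

Lemma Phi_bij : bijective Phi.
Proof.
exists Psi.
  move=> x; apply/hatC_eq; apply: heq_trans (hrep_hcls _) _; exact: Phi_rep.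
move=> z; apply/rhoC_eq; apply: heq_trans (Phi_rep _) _; exact: hrep_hcls.
Qed.

Lemma Phi_add x y : Phi (hadd x y) = radd (Phi x) (Phi y).
Proof.
have hm : modr (fun phi => rep (rrep (Phi x)) phi + rep (rrep (Phi y)) phi).
  exact: mod_add (rrep_mod _) (rrep_mod _).
rewrite /radd (rmk_eq _ ((part_i _).1 hm)).
apply/rhoC_eq; apply: heq_trans (Phi_rep _) _.
apply: heq_sym; apply: heq_trans (rrep_rcls _) _; apply: heq_trans (heq_sC _) _.
apply: heq_sym; apply: heq_trans (hrep_hmk _ (mod_add (hrep_mod x) (hrep_mod y))) _.
apply: heq_add; apply: heq_sym; exact: Phi_rep.
Qed.

Lemma Phi_sub x y : Phi (hsub x y) = rsub (Phi x) (Phi y).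
Proof.
have hm : modr (fun phi => rep (rrep (Phi x)) phi - rep (rrep (Phi y)) phi).
  exact: mod_sub (rrep_mod _) (rrep_mod _).
have hM : Mrho (ssubC (rrep (Phi x)) (rrep (Phi y))) by exact: ((part_i _).1 hm).
rewrite /rsub (rmk_eq _ hM).
apply/rhoC_eq; apply: heq_trans (Phi_rep _) _.
apply: heq_sym; apply: heq_trans (rrep_rcls _) _; apply: heq_trans (heq_sC _) _.
apply: heq_sym; apply: heq_trans (hrep_hmk _ (mod_sub (hrep_mod x) (hrep_mod y))) _.
apply: heq_sub; apply: heq_sym; exact: Phi_rep.
Qed.

Lemma Phi_mul x y : Phi (hmul x y) = rmul (Phi x) (Phi y).
Proof.
have hm : modr (fun phi => rep (rrep (Phi x)) phi * rep (rrep (Phi y)) phi).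
  exact: mod_mul (rrep_mod _) (rrep_mod _).
rewrite /rmul (rmk_eq _ ((part_i _).1 hm)).
apply/rhoC_eq; apply: heq_trans (Phi_rep _) _.
apply: heq_sym; apply: heq_trans (rrep_rcls _) _; apply: heq_trans (heq_sC _) _.
apply: heq_sym; apply: heq_trans (hrep_hmk _ (mod_mul (hrep_mod x) (hrep_mod y))) _.
apply: heq_mul; try (apply: heq_sym; exact: Phi_rep).
  exact: hrep_mod.
exact: rrep_mod.
Qed.

Lemma cabs_subRe (z : C) : cabs (z - (complex.Re z)%:C%C) = cabs ((complex.Im z)%:C%C).
Proof. by case: z => a b; rewrite /cabs /= subrr subr0 expr0n /= add0r addr0. Qed.

Lemma heq_Re_of (B : I -> C) : negl (fun phi => (complex.Im (B phi))%:C%C) ->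
  heq B (fun phi => (complex.Re (B phi))%:C%C).
Proof. move=> h; apply: (negl_le h); apply: ae_T => phi; by rewrite cabs_subRe. Qed.

Lemma Im_negl_heq (A B : I -> C) : heq A B ->
  negl (fun phi => (complex.Im (A phi))%:C%C) -> negl (fun phi => (complex.Im (B phi))%:C%C).
Proof. move=> h hA; apply: (negl_heq hA); apply: heq_sym; exact: heq_Im. Qed.

Lemma hreal_E (x : hatC U) : hreal x <-> negl (fun phi => (complex.Im (hrep x phi))%:C%C).
Proof.
split.
  move=> [A [hA [hIm ->]]]; apply: (Im_negl_heq (heq_sym (hrep_hcls hA))).
  by apply: (negl_eq negl0); apply: ae_T => phi; rewrite hIm.
move=> h; exists (fun phi => (complex.Re (hrep x phi))%:C%C), (mod_Re (hrep_mod x)).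
split => //; apply/hatC_cls; exact: heq_Re_of.
Qed.

Lemma rreal_E (z : rhoC U) : rreal z <-> negl (fun phi => (complex.Im (rep (rrep z) phi))%:C%C).
Proof.
split.
  move=> [x' [h ->]]; apply: (Im_negl_heq (heq_sym (rrep_rcls h))).
  apply: (Im_negl_heq (heq_sym (heq_sC _))).
  by apply: (negl_eq negl0); apply: ae_T.
move=> h.
set x' := sR U (fun phi => complex.Re (rep (rrep z) phi)).
have hmod : modr (fun phi => (rep x' phi)%:C%C).
  apply: (mod_eq (mod_Re (rrep_mod z))).
  by apply: (ae_mono (rep_ae (fun phi => complex.Re (rep (rrep z) phi)))) => phi ->.
have hM : Mrho (embR x') by exact: ((part_i _).1 hmod).
exists x', hM; rewrite -(rcls_rrep z) rcls_eq.
apply: heq_trans (heq_Re_of h) _; apply: heq_sym; apply: heq_trans (heq_sC _) _.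
apply: heq_ae.
by apply: (ae_mono (rep_ae (fun phi => complex.Re (rep (rrep z) phi)))) => phi ->.
Qed.

Lemma Phi_real x : hreal x <-> rreal (Phi x).
Proof.
rewrite hreal_E rreal_E; split; apply: Im_negl_heq; [apply: heq_sym|]; exact: Phi_rep.
Qed.


Lemma ae_False : ~ ae (fun _ => False).
Proof.
move=> h; apply: (@ae_F (fun _ => True) (ae_T (fun _ => Logic.I))).
by apply: (ae_mono h).
Qed.

Lemma div_close (a b L c e : R) : L < 0 -> 0 < e -> a - b <= c -> b - a <= c ->
  c * 2 <= - L * e -> `|a / L - b / L| <= e / 2.
Proof.
move=> L0 e0 h1 h2 h3.
have hL : L != 0 by rewrite lt_eqF.
have hu : a / L * L = a by rewrite divfK.
have hv : b / L * L = b by rewrite divfK.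
set u := a / L in hu *; set v := b / L in hv *.
rewrite ler_norml; apply/andP; split; nra.
Qed.

Lemma div_le (a L c : R) : L < 0 -> (a / L <= c <-> c * L <= a).
Proof.
move=> L0; have hL : L != 0 by rewrite lt_eqF.
have hu : a / L * L = a by rewrite divfK.
set u := a / L in hu *; split => h; nra.
Qed.

Lemma div_ge (a L c : R) : L < 0 -> (c <= a / L <-> a <= c * L).
Proof.
move=> L0; have hL : L != 0 by rewrite lt_eqF.
have hu : a / L * L = a by rewrite divfK.
set u := a / L in hu *; split => h; nra.
Qed.

Lemma ln_Rp (K : R) : ae (fun phi => 0 < Rp phi /\ Rp phi < 2^-1 /\ ln (Rp phi) < - K).
Proof.
apply: (ae2 Rp_half (Rp_lt (expR_gt0 (- K)))) => phi /andP[h1 h2] h3.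
split => //; split => //.
by rewrite -(expRK (- K)) ltr_ln ?posrE ?expR_gt0.
Qed.

Lemma notnegl_bound (B : I -> C) : ~ negl B ->
  exists n : nat, ae (fun phi => Rp phi ^+ n <= cabs (B phi)).
Proof.
move=> nB.
have [p hp] : exists p : nat, ~ ae (fun phi => cabs (B phi) < Rp phi ^+ p).
  apply: contrapT => hh; apply: nB => p; apply: contrapT => hp; apply: hh; by exists p.
exists p; apply: (ae_mono (ae_em hp)) => phi /negP; by rewrite -leNgt.
Qed.

Definition lnr (B : I -> C) (phi : I) : R := ln (cabs (B phi)) / ln (Rp phi).

Definition valN (B : I -> C) (s : R) :=
  forall e : R, 0 < e -> ae (fun phi => 0 < cabs (B phi) /\ `|lnr B phi - s| < e).

Lemma valN_exists (B : I -> C) : modr B -> ~ negl B -> exists s, valN B s.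
Proof.
move=> /modE[m hm] /notnegl_bound[n hn].
have hb : ae (fun phi => 0 < cabs (B phi) /\ - m%:R <= lnr B phi <= n%:R).
  apply: (ae3 hm hn (ln_Rp 0)) => phi h1 h2 [h3 [h4 h5]].
  rewrite oppr0 in h5.
  have hpos : 0 < cabs (B phi) by apply: lt_le_trans h2; exact: exprn_gt0.
  split => //; apply/andP; split.
    apply/div_ge => //.
    have : ln (cabs (B phi)) <= ln ((Rp phi)^-1 ^+ m).
      by rewrite ler_ln ?posrE ?exprn_gt0 ?invr_gt0.
    rewrite lnXn ?invr_gt0 // lnV ?posrE // -mulr_natr; nra.
  apply/div_le => //.
  have : ln (Rp phi ^+ n) <= ln (cabs (B phi)).
    by rewrite ler_ln ?posrE ?exprn_gt0.
  rewrite lnXn // -mulr_natr; nra.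
set S := [set r : R | ae (fun phi => r < lnr B phi)].
have hS : has_sup S.
  split.
    exists (- m%:R - 1); apply: (ae_mono hb) => phi [_ /andP[h _]]; lra.
  exists n%:R => r hr; rewrite leNgt; apply/negP => hrn; apply: ae_False.
  by apply: (ae2 hr hb) => phi h1 [_ /andP[_ h2]]; lra.
exists (sup S) => e e0.
have [r hr hrs] := sup_adherent e0 hS.
have hnS : ~ S (sup S + e / 2).
  move=> h; have := sup_upper_bound hS h; lra.
apply: (ae3 hr (ae_em hnS) hb) => phi h1 h2 [h3 _]; split => //.
move/negP: h2; rewrite -leNgt => h2.
rewrite ltr_norml; apply/andP; split; lra.
Qed.

Lemma valN_heq (A B : I -> C) s : valN A s -> ~ negl A -> heq A B -> valN B s.
Proof.
move=> hv nA hAB.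
have [n hn] := notnegl_bound nA.
move=> e e0.
have e40 : 0 < e / 4 by lra.
apply: (ae4 (hv (e / 2) ltac:(lra)) hn (hAB n.+1) (ln_Rp (ln 2 * 8 / e)))
  => phi [h1 h2] h3 h4 [h5 [h6 h7]].
have hs := pow_step n h5 (ltW h6).
have hD := cabsD (A phi - B phi) (B phi); rewrite subrK in hD.
have hD2 := cabsD (A phi) (B phi - A phi); rewrite addrC subrK cabsB in hD2.
have hBp : 0 < cabs (B phi) by lra.
split => //.
have l1 : ln (cabs (B phi)) <= ln 2 + ln (cabs (A phi)).
  have e1 : ln (2 * cabs (A phi)) = ln 2 + ln (cabs (A phi)).
    by apply: lnM; rewrite posrE; lra.
  rewrite -e1 ler_ln ?posrE; lra.
have l2 : ln (cabs (A phi)) <= ln 2 + ln (cabs (B phi)).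
  have e1 : ln (2 * cabs (B phi)) = ln 2 + ln (cabs (B phi)).
    by apply: lnM; rewrite posrE; lra.
  rewrite -e1 ler_ln ?posrE; lra.
have l20 : 0 < ln (2 : R) by apply: ln_gt0; lra.
have he : ln 2 * 8 / e * e = ln 2 * 8 by rewrite divfK // gt_eqF.
have K0 : 0 < ln 2 * 8 / e by apply: divr_gt0 => //; lra.
have hcl : `|lnr B phi - lnr A phi| <= e / 4 / 2.
  rewrite /lnr; apply: (div_close (c := ln 2)); try lra.
  set K := ln 2 * 8 / e in he h7 K0; nra.
have := ler_normD (lnr B phi - lnr A phi) (lnr A phi - s).
rewrite addrA subrK; lra.
Qed.

Lemma small_nat (c : R) : 0 < c -> exists n : nat, (n.+1%:R)^-1 < c.
Proof.
move=> c0; exists (Num.Def.archi_bound c^-1).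
rewrite invf_plt ?posrE //.
apply: (lt_le_trans (archi_boundP _)); first by rewrite invr_ge0 ltW.
by rewrite ler_nat.
Qed.

Lemma notnegl_ge (D : I -> C) (c : R) : 0 < c ->
  ae (fun phi => c <= cabs (D phi)) -> ~ negl D.
Proof.
move=> c0 h hD; apply: ae_False.
by apply: (ae3 h (hD 1%N) (Rp_lt c0)) => phi h1; rewrite expr1 => h2 h3; lra.
Qed.

Lemma happrox_E (B : I -> C) : happrox0N U B <->
  forall n : nat, ae (fun phi => cabs (B phi) < (n.+1%:R)^-1).
Proof.
split => h n.
  case: (h n) => _ h2; by apply: (ae_mono h2) => phi /=; rewrite subr_gt0.
split; last first.
  by apply: (ae_mono (h n)) => phi /=; rewrite subr_gt0.
set k := n.*2.+1.
have hk : (k.+1%:R : R) = 2 * n.+1%:R.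
  by rewrite /k -mul2n -natrM mulnS mul2n.
have c0 : (0 : R) < (n.+1%:R)^-1 by rewrite invr_gt0 ltr0n.
apply: (notnegl_ge (c := (n.+1%:R)^-1 / 2)); first by rewrite divr_gt0.
apply: (ae_mono (h k)) => phi hb.
rewrite /= -rmorphB cabsR ler_normr; apply/orP; left.
move: hb; rewrite hk invfM.
have : 0 <= cabs (B phi) by exact: cabs_ge0.
move=> h0 hb; set N := (n.+1%:R : R)^-1 in c0 hb *; lra.
Qed.

Lemma cabs_divR (z : C) (c : R) : 0 < c -> cabs (z / (c%:C)%C) = cabs z / c.
Proof.
by move=> c0; rewrite cabsM cabsV cabsR gtr0_norm.
Qed.

Lemma ratio_E (A : I -> C) (q : R) (phi : I) : 0 < Rp phi -> Rp phi < 1 ->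
  0 < cabs (A phi) ->
  cabs (A phi / (powR (Rp phi) q)%:C%C) = expR ((lnr A phi - q) * ln (Rp phi)).
Proof.
move=> h1 h1' h2.
have hp : powR (Rp phi) q = expR (q * ln (Rp phi)) by rewrite /powR gt_eqF.
rewrite cabs_divR hp ?expR_gt0 // mulrBl expRB; congr (_ / _).
have hL : ln (Rp phi) != 0 by rewrite lt_eqF // ln_lt0 // h1 h1'.
by rewrite /lnr divfK // lnK ?posrE.
Qed.

Lemma hval_val (x : hatC U) s : ~ negl (hrep x) -> valN (hrep x) s -> Defs.hval x = s%:E.
Proof.
move=> nA hv; rewrite /Defs.hval; case: pselect => [h0|h0]; first by exfalso; apply: nA.
set Q := [set q : rat | _].
have Qa : forall q, Q q -> ratr q <= s.
  move=> q /happrox_E /(_ 0%N) hq; rewrite leNgt; apply/negP => hs.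
  apply: ae_False.
  apply: (ae3 hq (hv ((ratr q - s) / 2) ltac:(lra)) (ln_Rp 0)) => phi h1 [h2 h3] [h4 [h5 h6]].
  have r1 : Rp phi < 1 by lra.
  rewrite ratio_E // in h1.
  rewrite oppr0 in h6; move: h1; rewrite invr1 expR_lt1.
  move: h3; rewrite ltr_norml => /andP[_ h3]; nra.
have Qb : forall q, ratr q < s -> Q q.
  move=> q hs; apply/happrox_E => n.
  have e0 : 0 < (s - ratr q) / 2 by lra.
  have hn : 0 <= ln (n.+1%:R : R) by apply: ln_ge0; rewrite ler1n.
  apply: (ae2 (hv _ e0) (ln_Rp (ln n.+1%:R / ((s - ratr q) / 2)))) => phi [h2 h3] [h4 [h5 h6]].
  have r1 : Rp phi < 1 by lra.
  rewrite ratio_E //.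
  have -> : (n.+1%:R : R)^-1 = expR (- ln n.+1%:R).
    by rewrite expRN lnK // posrE ltr0n.
  rewrite ltr_expR.
  move: h3; rewrite ltr_norml => /andP[h3 _].
  set e := (s - ratr q) / 2 in e0 h3 h6.
  set K := ln n.+1%:R / e in h6.
  have hK : K * e = ln n.+1%:R by rewrite /K divfK // gt_eqF.
  have K0 : 0 <= K by apply: divr_ge0 => //; exact: ltW.
  have he : 2 * e = s - ratr q by rewrite /e; lra.
  have hF : e < lnr (hrep x) phi - ratr q by lra.
  have L0 : ln (Rp phi) < 0 by lra.
  have p1 : (lnr (hrep x) phi - ratr q) * ln (Rp phi) < e * ln (Rp phi).
    by rewrite ltr_nM2r.
  have p2 : e * ln (Rp phi) < e * (- K) by rewrite ltr_pM2l.
  lra.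
apply/eqP; rewrite eq_le; apply/andP; split.
  apply: ge_ereal_sup => _ [q hq <-]; rewrite lee_fin; exact: Qa.
have key : forall t : R, t < s -> (t%:E <= ereal_sup [set (ratr q : R)%:E | q in Q])%E.
  move=> t ts; have [q /andP[h1 h2]] : exists q : rat, t < ratr q < s.
    have [q] := rat_in_itvoo ts; rewrite in_itv /= => hq; by exists q.
  apply: (@le_trans _ _ (ratr q)%:E); first by rewrite lee_fin ltW.
  apply: ereal_sup_ubound; exists q => //; exact: Qb.
case E : (ereal_sup _) => [t| |].
- rewrite lee_fin leNgt; apply/negP => ts.
  have := key ((t + s) / 2) ltac:(lra); rewrite E lee_fin; lra.
- by rewrite leey.
- have := key (s - 1) ltac:(lra); by rewrite E leeNy_eq.
Qed.

Lemma sinf_E (y : starR U) : Defs.sinf y <->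
  forall n : nat, ae (fun phi => `|rep y phi| < (n.+1%:R)^-1).
Proof.
rewrite /Defs.sinf; split => h n; move: (h n).
  move/sltR_E => hn.
  apply: (ae3 hn (rep_ae (fun phi => `|rep y phi|)) (rep_ae (fun _ : I => (n.+1%:R : R)^-1)))
    => phi h1 h2 h3.
  by move: h1; rewrite /sabsR /sconst /sR h2 h3.
move=> hn; apply/sltR_E.
apply: (ae3 hn (rep_ae (fun phi => `|rep y phi|)) (rep_ae (fun _ : I => (n.+1%:R : R)^-1)))
  => phi h1 h2 h3.
by rewrite /sabsR /sconst /sR h2 h3.
Qed.

Lemma sinf_sub (X : starR U) (r : R) : Defs.sinf (ssubR X (sconst U r)) <->
  forall n : nat, ae (fun phi => `|rep X phi - r| < (n.+1%:R)^-1).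
Proof.
rewrite sinf_E; split => h n; move: (h n) => hn.
  apply: (ae3 hn (rep_ae (fun phi => rep X phi - rep (sconst U r) phi))
    (rep_ae (fun _ : I => r))) => phi h1 h2 h3.
  by move: h1; rewrite /ssubR /sR h2 /sconst /sR h3.
apply: (ae3 hn (rep_ae (fun phi => rep X phi - rep (sconst U r) phi))
  (rep_ae (fun _ : I => r))) => phi h1 h2 h3.
by rewrite /ssubR /sR h2 /sconst /sR h3.
Qed.

Lemma st_eq (X : starR U) (f : I -> R) (s : R) :
  ae (fun phi => rep X phi = f phi) ->
  (forall e, 0 < e -> ae (fun phi => `|f phi - s| < e)) -> Defs.st X = s.
Proof.
move=> hX hf.
have P : forall r, Defs.sinf (ssubR X (sconst U r)) <->
    forall n : nat, ae (fun phi => `|f phi - r| < (n.+1%:R)^-1).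
  move=> r; rewrite sinf_sub; split => h n.
    by apply: (ae2 (h n) hX) => phi h1 h2; rewrite -h2.
  by apply: (ae2 (h n) hX) => phi h1 h2; rewrite h2.
apply: xget_unique.
  apply/P => n; apply: hf; by rewrite invr_gt0 ltr0n.
move=> y /P hy; apply: contrapT => ne.
have d0 : 0 < `|y - s| / 2 by rewrite divr_gt0 // normr_gt0 subr_eq0; apply/eqP.
have [n hn] := small_nat d0.
have hpos : (0:R) < (n.+1%:R)^-1 by rewrite invr_gt0 ltr0n.
apply: ae_False; apply: (ae2 (hy n) (hf _ hpos)) => phi h1 h2.
have := ler_normD (y - f phi) (f phi - s); rewrite addrA subrK (distrC y (f phi)).
set N := (n.+1%:R : R)^-1 in hn h1 h2 *; lra.
Qed.

Lemma rval_Phi (x : hatC U) s : ~ negl (hrep x) -> valN (hrep x) s ->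
  Defs.rval (Phi x) = s%:E.
Proof.
move=> nA hv; rewrite /Defs.rval; case: pselect => [h|h0].
  exfalso; apply: nA; move/Nrho_E: h => h.
  exact: (negl_heq h (heq_sym (Phi_rep x))).
congr EFin.
set z' := rrep (Phi x).
have hv' : valN (rep z') s by apply: (valN_heq hv nA); apply: heq_sym; exact: Phi_rep.
apply: (st_eq (f := lnr (rep z'))); last first.
  by move=> e e0; apply: (ae_mono (hv' e e0)) => phi [].
set X1 := sln (sabs z'); set X2 := sln (rho U).
have hA := rep_ae (fun phi => rep X1 phi / rep X2 phi).
have hB := rep_ae (fun phi => ln (rep (sabs z') phi)).
have hC := rep_ae (fun phi => cabs (rep z' phi)).
have hD := rep_ae (fun phi => ln (rep (rho U) phi)).
have hAB : ae (fun phi => rep (sdivR X1 X2) phi = rep X1 phi / rep X2 phi /\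
    rep X1 phi = ln (rep (sabs z') phi)).
  by apply: (ae2 hA hB).
apply: (ae4 hAB hC hD rho_E) => phi [h1 h2] h3 h4 h5.
rewrite /lnr h1 h2 /X2 h4 /sabs h3 h5.
by [].
Qed.

Lemma val_Phi (x : hatC U) : Defs.rval (Phi x) = Defs.hval x.
Proof.
case: (pselect (negl (hrep x))) => h.
  rewrite /Defs.rval /Defs.hval.
  case: pselect => [h1|hn]; case: pselect => [h2|hn'] //.
  exfalso; apply: hn; apply/Nrho_E; apply: (negl_heq h); exact: Phi_rep.
have [s hs] := valN_exists (hrep_mod x) h.
by rewrite (rval_Phi h hs) (hval_val h hs).
Qed.


Definition hposN (B : I -> C) :=
  [/\ ~ negl B, negl (fun phi => (complex.Im (B phi))%:C%C) & ae (fun phi => 0 < complex.Re (B phi))].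

Lemma negl_Im_bound (B : I -> C) : negl (fun phi => (complex.Im (B phi))%:C%C) ->
  forall p, ae (fun phi => `|complex.Im (B phi)| < Rp phi ^+ p).
Proof. by move=> h p; apply: (ae_mono (h p)) => phi; rewrite cabsR. Qed.

Lemma heq_Re_bound (A B : I -> C) : heq A B ->
  forall p, ae (fun phi => `|complex.Re (A phi) - complex.Re (B phi)| < Rp phi ^+ p).
Proof.
move=> h p; apply: (ae_mono (h p)) => phi h1; apply: le_lt_trans h1.
by rewrite -raddfB; exact: cabs_Re.
Qed.

Lemma heq_Im_bound (A B : I -> C) : heq A B ->
  forall p, ae (fun phi => `|complex.Im (A phi) - complex.Im (B phi)| < Rp phi ^+ p).
Proof.
move=> h p; apply: (ae_mono (h p)) => phi h1; apply: le_lt_trans h1.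
by rewrite -raddfB; exact: cabs_Im.
Qed.

Lemma notnegl_pow (D : I -> C) (n : nat) :
  ae (fun phi => Rp phi ^+ n <= cabs (D phi)) -> ~ negl D.
Proof.
move=> h hD; apply: ae_False; apply: (ae2 h (hD n)) => phi h1 h2; lra.
Qed.

Lemma posN_heq (A B : I -> C) : hposN A -> heq A B -> hposN B.
Proof.
move=> [nA iA rA] h; split.
- move=> nB; apply: nA; exact: (negl_heq nB h).
- exact: (Im_negl_heq h iA).
have [n hn] := notnegl_bound nA.
apply: (ae4 (ae2 hn rA (fun phi a b => conj a b)) (negl_Im_bound iA n.+2)
  (heq_Re_bound h n.+2) Rp_half) => phi [h1 h2] h3 h4 /andP[h5 h6].
have := cabs_ReIm (A phi); rewrite (gtr0_norm h2).
have s1 := pow_step n h5 (ltW h6); have s2 := pow_step n.+1 h5 (ltW h6).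
have := exprn_gt0 n.+2 h5.
rewrite ltr_norml in h4; case/andP: h4 => h4 h4'.
move=> *; lra.
Qed.

Lemma hpos_E (x : hatC U) : hpos x <-> hposN (hrep x).
Proof.
split.
  move=> [nx [A [hA [hIm [hx hRe]]]]].
  have hxA : heq (hrep x) A by apply/hatC_cls.
  apply: (posN_heq _ (heq_sym hxA)); split.
  - move=> nA; apply: nx; exact: (negl_heq nA hxA).
  - by apply: (negl_eq negl0); apply: ae_T => phi; rewrite hIm.
  - exact: hRe.
move=> [nx ix rx]; split => //.
exists (fun phi => (complex.Re (hrep x phi))%:C%C), (mod_Re (hrep_mod x)).
split => //; split; last exact: rx.
apply/hatC_cls; exact: heq_Re_of.
Qed.

Lemma hsub_rep (a b : hatC U) : heq (hrep (hsub a b)) (fun phi => hrep a phi - hrep b phi).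
Proof. apply: hrep_hmk; exact: mod_sub (hrep_mod a) (hrep_mod b). Qed.

Lemma hadd_rep (a b : hatC U) : heq (hrep (hadd a b)) (fun phi => hrep a phi + hrep b phi).
Proof. apply: hrep_hmk; exact: mod_add (hrep_mod a) (hrep_mod b). Qed.

Lemma hre_rep (a : hatC U) : heq (hrep (hre a)) (fun phi => (complex.Re (hrep a phi))%:C%C).
Proof. apply: hrep_hmk; exact: mod_Re (hrep_mod a). Qed.

Lemma him_rep (a : hatC U) : heq (hrep (him a)) (fun phi => (complex.Im (hrep a phi))%:C%C).
Proof. apply: hrep_hmk; exact: mod_Im (hrep_mod a). Qed.

Lemma hreal_hre (a : hatC U) : hreal (hre a).
Proof.
apply/hreal_E; apply: (Im_negl_heq (heq_sym (hre_rep a))).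
by apply: (negl_eq negl0); apply: ae_T.
Qed.

Lemma hreal_him (a : hatC U) : hreal (him a).
Proof.
apply/hreal_E; apply: (Im_negl_heq (heq_sym (him_rep a))).
by apply: (negl_eq negl0); apply: ae_T.
Qed.

Lemma hlt_margin (a y : hatC U) : hlt a y ->
  exists n : nat, ae (fun phi => Rp phi ^+ n <= complex.Re (hrep y phi) - complex.Re (hrep a phi)).
Proof.
move=> [_ _ /hpos_E hp].
have [nY iY rY] := posN_heq hp (hsub_rep y a).
have [n hn] := notnegl_bound nY.
exists n.+1.
apply: (ae4 hn (negl_Im_bound iY n.+1) rY Rp_half) => phi h1 h2 h3 /andP[h5 h6].
have := cabs_ReIm (hrep y phi - hrep a phi); rewrite (gtr0_norm h3).
have s1 := pow_step n h5 (ltW h6).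
have := exprn_gt0 n.+1 h5.
have e : complex.Re (hrep y phi) - complex.Re (hrep a phi) = complex.Re (hrep y phi - hrep a phi).
  by rewrite raddfB.
rewrite e; move=> *; lra.
Qed.

Lemma hlt_of_margin (a y : hatC U) (n : nat) : hreal a -> hreal y ->
  ae (fun phi => Rp phi ^+ n <= complex.Re (hrep y phi) - complex.Re (hrep a phi)) -> hlt a y.
Proof.
move=> ha hy hm; split => //.
apply/hpos_E; apply: (posN_heq _ (heq_sym (hsub_rep y a))); split.
- apply: (notnegl_pow (n := n)); apply: (ae_mono hm) => phi h.
  apply: (le_trans h); rewrite -raddfB /=; apply: le_trans (cabs_Re _).
  exact: ler_norm.
- move/hreal_E: ha => ha; move/hreal_E: hy => hy.
  apply: (negl_eq (negl_sub hy ha)); apply: ae_T => phi.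
  by rewrite -rmorphB -raddfB.
- apply: (ae2 hm Rp_pos) => phi h1 h2; rewrite raddfB /=.
  by apply: lt_le_trans h1; exact: exprn_gt0.
Qed.

Lemma pow_anti (N M : nat) : (N <= M)%N -> ae (fun phi => Rp phi ^+ M <= Rp phi ^+ N).
Proof.
move=> NM; apply: (ae_mono Rp_half) => phi /andP[h1 h2].
apply: ler_wiXn2l => //; [exact: ltW | lra].
Qed.

Lemma hnorm_negl (x : hatC U) : negl (hrep x) -> hnorm x = 0.
Proof.
by move=> h; rewrite /hnorm /Defs.hval; case: pselect => [h1|h1].
Qed.

Lemma hnorm_val (x : hatC U) s : ~ negl (hrep x) -> valN (hrep x) s -> hnorm x = expR (- s).
Proof. by move=> nA hv; rewrite /hnorm (hval_val nA hv). Qed.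

Lemma hnorm_le (x : hatC U) (K : nat) :
  ae (fun phi => cabs (hrep x phi) <= Rp phi ^+ K) -> hnorm x <= expR (- K%:R).
Proof.
move=> hK.
case: (pselect (negl (hrep x))) => h.
  by rewrite hnorm_negl // ltW // expR_gt0.
have [s hs] := valN_exists (hrep_mod x) h.
rewrite (hnorm_val h hs) ler_expR lerN2 leNgt; apply/negP => sK.
apply: ae_False.
apply: (ae3 hK (hs ((K%:R - s) / 2) ltac:(lra)) (ln_Rp 0)) => phi h1 [h2 h3] [h4 [h5 h6]].
rewrite oppr0 in h6.
have : ln (cabs (hrep x phi)) <= ln (Rp phi ^+ K) by rewrite ler_ln ?posrE ?exprn_gt0.
rewrite lnXn // -mulr_natr => hl.
have L0 : ln (Rp phi) < 0 by lra.
have : K%:R <= lnr (hrep x) phi by apply/div_ge => //; lra.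
rewrite ltr_norml in h3; case/andP: h3 => h3 h3'.
move=> *; lra.
Qed.

Lemma hnorm_lt (x : hatC U) (N : nat) :
  hnorm x < expR (- N%:R) -> ae (fun phi => cabs (hrep x phi) < Rp phi ^+ N).
Proof.
move=> hN.
case: (pselect (negl (hrep x))) => h; first exact: h.
have [s hs] := valN_exists (hrep_mod x) h.
move: hN; rewrite (hnorm_val h hs) ltr_expR ltrN2 => sN.
apply: (ae2 (hs (s - N%:R) ltac:(lra)) (ln_Rp 0)) => phi [h2 h3] [h4 [h5 h6]].
rewrite oppr0 in h6.
rewrite -ltr_ln ?posrE ?exprn_gt0 // lnXn // -mulr_natr.
rewrite ltNge; apply/negP => hl.
have L0 : ln (Rp phi) < 0 by lra.
have : lnr (hrep x) phi <= N%:R by apply/div_le => //; lra.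
rewrite ltr_norml in h3; case/andP: h3 => h3 h3'.
move=> *; lra.
Qed.


Lemma hre_close (x : hatC U) p :
  ae (fun phi => `|complex.Re (hrep (hre x) phi) - complex.Re (hrep x phi)| < Rp phi ^+ p).
Proof. exact: (heq_Re_bound (hre_rep x) p). Qed.

Lemma him_close (x : hatC U) p :
  ae (fun phi => `|complex.Re (hrep (him x) phi) - complex.Im (hrep x phi)| < Rp phi ^+ p).
Proof. exact: (heq_Re_bound (him_rep x) p). Qed.

Lemma hsub_close (a b : hatC U) p : ae (fun phi =>
  `|complex.Re (hrep (hsub a b) phi) - (complex.Re (hrep a phi) - complex.Re (hrep b phi))|
    < Rp phi ^+ p).
Proof.
apply: (ae_mono (heq_Re_bound (hsub_rep a b) p)) => phi; by rewrite raddfB.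
Qed.

Lemma hadd_close (a b : hatC U) p : ae (fun phi =>
  `|complex.Re (hrep (hadd a b) phi) - (complex.Re (hrep a phi) + complex.Re (hrep b phi))|
    < Rp phi ^+ p).
Proof.
apply: (ae_mono (heq_Re_bound (hadd_rep a b) p)) => phi; by rewrite raddfD.
Qed.

Definition hdel (k : nat) : hatC U := hcls (mod_Rpow k).

Lemma hdel_close k p :
  ae (fun phi => `|complex.Re (hrep (hdel k) phi) - Rp phi ^+ k| < Rp phi ^+ p).
Proof. exact: (heq_Re_bound (hrep_hcls (mod_Rpow k)) p). Qed.

Lemma hreal_hdel k : hreal (hdel k).
Proof. by exists (fun phi => (Rp phi ^+ k)%:C%C), (mod_Rpow k). Qed.

Lemma hreal_sub (a b : hatC U) : hreal a -> hreal b -> hreal (hsub a b).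
Proof.
move=> /hreal_E ha /hreal_E hb; apply/hreal_E.
apply: (Im_negl_heq (heq_sym (hsub_rep a b))).
apply: (negl_eq (negl_sub ha hb)); apply: ae_T => phi; by rewrite -rmorphB -raddfB.
Qed.

Lemma hreal_add (a b : hatC U) : hreal a -> hreal b -> hreal (hadd a b).
Proof.
move=> /hreal_E ha /hreal_E hb; apply/hreal_E.
apply: (Im_negl_heq (heq_sym (hadd_rep a b))).
apply: (negl_eq (negl_add ha hb)); apply: ae_T => phi; by rewrite -rmorphD -raddfD.
Qed.

Lemma pow_steps (r : R) p : 0 < r -> r < 2^-1 ->
  [/\ 0 < r ^+ p, 2 * r ^+ p.+1 <= r ^+ p, 2 * r ^+ p.+2 <= r ^+ p.+1,
      2 * r ^+ p.+3 <= r ^+ p.+2 & 2 * r ^+ p.+4 <= r ^+ p.+3].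
Proof.
move=> h1 h2; split; first exact: exprn_gt0.
all: apply: pow_step => //; exact: ltW.
Qed.

Lemma itv_around (c : hatC U) (k : nat) : hreal c ->
  hlt (hsub c (hdel k)) c /\ hlt c (hadd c (hdel k)).
Proof.
move=> hc; split.
  apply: (hlt_of_margin (n := k.+1)) => //.
    apply: hreal_sub => //; exact: hreal_hdel.
  apply: (ae3 (hsub_close c (hdel k) k.+2) (hdel_close k k.+2) Rp_half)
    => phi h1 h2 /andP[h3 h4].
  have [q0 q1 q2 _ _] := pow_steps k h3 h4.
  rewrite ltr_norml in h1; rewrite ltr_norml in h2.
  case/andP: h1 => h1 h1'; case/andP: h2 => h2 h2'; lra.
apply: (hlt_of_margin (n := k.+1)) => //.
  apply: hreal_add => //; exact: hreal_hdel.
apply: (ae3 (hadd_close c (hdel k) k.+2) (hdel_close k k.+2) Rp_half)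
  => phi h1 h2 /andP[h3 h4].
have [q0 q1 q2 _ _] := pow_steps k h3 h4.
rewrite ltr_norml in h1; rewrite ltr_norml in h2.
case/andP: h1 => h1 h1'; case/andP: h2 => h2 h2'; lra.
Qed.

Lemma itv_close (c y : hatC U) (k : nat) :
  hlt (hsub c (hdel k)) y -> hlt y (hadd c (hdel k)) ->
  ae (fun phi => `|complex.Re (hrep y phi) - complex.Re (hrep c phi)| <= 2 * Rp phi ^+ k).
Proof.
move=> /hlt_margin[n1 h1] /hlt_margin[n2 h2].
apply: (ae4 (ae2 h1 h2 (fun phi a b => conj a b))
  (ae2 (hsub_close c (hdel k) k.+2) (hadd_close c (hdel k) k.+2) (fun phi a b => conj a b))
  (hdel_close k k.+2) Rp_half) => phi [g1 g2] [g3 g4] g5 /andP[h3 h4].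
have [q0 q1 q2 _ _] := pow_steps k h3 h4.
have := exprn_gt0 n1 h3; have := exprn_gt0 n2 h3.
rewrite ltr_norml in g3; rewrite ltr_norml in g4; rewrite ltr_norml in g5.
case/andP: g3 => g3 g3'; case/andP: g4 => g4 g4'; case/andP: g5 => g5 g5'.
rewrite ler_norml; move=> *; apply/andP; split; lra.
Qed.

Lemma ord_open_itv (lo hi : option (hatC U)) : ord_open (hinterval lo hi).
Proof.
split; first by move=> x [].
by move=> x hx; exists lo, hi; split => // y.
Qed.

Lemma lo_stable (lo : option (hatC U)) (y : hatC U) :
  (if lo is Some a then hlt a y else True) ->
  exists N : nat, forall (y' : hatC U) (M : nat), (N <= M)%N -> hreal y' ->
    ae (fun phi => `|complex.Re (hrep y' phi) - complex.Re (hrep y phi)| <= Rp phi ^+ M) ->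
    (if lo is Some a then hlt a y' else True).
Proof.
case: lo => [a|]; last by exists 0%N.
move=> hay; have [n hn] := hlt_margin hay.
exists n.+1 => y' M NM hy' hc.
apply: (hlt_of_margin (n := n.+1)) => //; first by case: hay.
apply: (ae4 hn hc (pow_anti NM) Rp_half) => phi h1 h2 h3 /andP[h4 h5].
have [q0 q1 _ _ _] := pow_steps n h4 h5.
rewrite ler_norml in h2; case/andP: h2 => h2 h2'; lra.
Qed.

Lemma hi_stable (hi : option (hatC U)) (y : hatC U) :
  (if hi is Some b then hlt y b else True) ->
  exists N : nat, forall (y' : hatC U) (M : nat), (N <= M)%N -> hreal y' ->
    ae (fun phi => `|complex.Re (hrep y' phi) - complex.Re (hrep y phi)| <= Rp phi ^+ M) ->
    (if hi is Some b then hlt y' b else True).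
Proof.
case: hi => [b|]; last by exists 0%N.
move=> hyb; have [n hn] := hlt_margin hyb.
exists n.+1 => y' M NM hy' hc.
apply: (hlt_of_margin (n := n.+1)) => //; first by case: hyb.
apply: (ae4 hn hc (pow_anti NM) Rp_half) => phi h1 h2 h3 /andP[h4 h5].
have [q0 q1 _ _ _] := pow_steps n h4 h5.
rewrite ler_norml in h2; case/andP: h2 => h2 h2'; lra.
Qed.

Lemma itv_stable (lo hi : option (hatC U)) (y : hatC U) : hinterval lo hi y ->
  exists N : nat, forall (y' : hatC U) (M : nat), (N <= M)%N -> hreal y' ->
    ae (fun phi => `|complex.Re (hrep y' phi) - complex.Re (hrep y phi)| <= Rp phi ^+ M) ->
    hinterval lo hi y'.
Proof.
move=> [hy hl hh].
have [N1 h1] := lo_stable hl; have [N2 h2] := hi_stable hh.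
exists (maxn N1 N2) => y' M NM hy' hc; split => //.
  apply: h1 hy' hc; exact: leq_trans (leq_maxl _ _) NM.
apply: h2 hy' hc; exact: leq_trans (leq_maxr _ _) NM.
Qed.


Lemma aeC (P Q : I -> Prop) : ae P -> ae Q -> ae (fun phi => P phi /\ Q phi).
Proof. by move=> h1 h2; apply: (ae2 h1 h2). Qed.

Lemma metric_to_order (S : set (hatC U)) : metric_open S -> order_open S.
Proof.
move=> hS z Sz; have [e [e0 he]] := hS z Sz.
set K := Num.Def.archi_bound `|ln e|.
have hK : expR (- K%:R) < e.
  rewrite -[X in _ < X](@lnK _ e) ?posrE // ltr_expR.
  have := archi_boundP (normr_ge0 (ln e)); rewrite -/K.
  have : - ln e <= `|ln e| by rewrite -normrN ler_norm.
  lra.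
clearbody K.
set k := K.+4.
exists (hinterval (Some (hsub (hre z) (hdel k))) (Some (hadd (hre z) (hdel k)))).
exists (hinterval (Some (hsub (him z) (hdel k))) (Some (hadd (him z) (hdel k)))).
have [a1 a2] := itv_around k (hreal_hre z); have [b1 b2] := itv_around k (hreal_him z).
split; try exact: ord_open_itv.
- split => //; exact: hreal_hre.
- split => //; exact: hreal_him.
move=> w [_ v1 v2] [_ w1 w2]; apply: he.
rewrite /hdist; apply: (le_lt_trans _ hK); apply: hnorm_le.
have c1 := itv_close v1 v2; have c2 := itv_close w1 w2.
apply: (ae4 (aeC c1 c2) (aeC (aeC (hre_close w k) (hre_close z k))
    (aeC (him_close w k) (him_close z k))) (hsub_rep z w k) Rp_half)
  => phi [g1 g2] [[g3 g4] [g5 g6]] g7 /andP[h3 h4].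
have [q0 q1 q2 q3 q4] := pow_steps K h3 h4.
have t1 := cabsD (hrep (hsub z w) phi - (hrep z phi - hrep w phi)) (hrep z phi - hrep w phi).
rewrite subrK in t1.
have t2 := cabs_ReIm (hrep z phi - hrep w phi).
rewrite !raddfB /= in t2.
have r1 : `|complex.Re (hrep z phi) - complex.Re (hrep w phi)| <= 4 * Rp phi ^+ k.
  clear -g1 g3 g4; move: (Rp phi ^+ k) g1 g3 g4 => t g1 g3 g4; rewrite ler_norml in g1; rewrite ltr_norml in g3; rewrite ltr_norml in g4.
  case/andP: g1 => g1 g1'; case/andP: g3 => g3 g3'; case/andP: g4 => g4 g4'.
  rewrite ler_norml; apply/andP; split; lra.
have r2 : `|complex.Im (hrep z phi) - complex.Im (hrep w phi)| <= 4 * Rp phi ^+ k.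
  clear -g2 g5 g6; move: (Rp phi ^+ k) g2 g5 g6 => t g2 g5 g6; rewrite ler_norml in g2; rewrite ltr_norml in g5; rewrite ltr_norml in g6.
  case/andP: g2 => g2 g2'; case/andP: g5 => g5 g5'; case/andP: g6 => g6 g6'.
  rewrite ler_norml; apply/andP; split; lra.
rewrite /k in g7 r1 r2 *; clear -g7 t1 t2 r1 r2 q0 q1 q2 q3 q4.
move: (Rp phi ^+ K) (Rp phi ^+ K.+1) (Rp phi ^+ K.+2) (Rp phi ^+ K.+3) (Rp phi ^+ K.+4)
  g7 t1 t2 r1 r2 q0 q1 q2 q3 q4 => a0 a1 a2 a3 a4 *.
lra.
Qed.

Lemma order_to_metric (S : set (hatC U)) : order_open S -> metric_open S.
Proof.
move=> hO z Sz; have [V [W [oV oW Vz Wz hVW]]] := hO z Sz.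
have [lo1 [hi1 [i1 s1]]] := oV.2 _ Vz; have [lo2 [hi2 [i2 s2]]] := oW.2 _ Wz.
have [N1 h1] := itv_stable i1; have [N2 h2] := itv_stable i2.
have hN1 := leq_maxl N1 N2; have hN2 := leq_maxr N1 N2.
set N := maxn N1 N2 in hN1 hN2 *; clearbody N.
exists (expR (- N.+1%:R)); split; first exact: expR_gt0.
move=> w hw; have hc := hnorm_lt hw.
have base := ae4 hc (hsub_rep z w N.+3) (aeC (hre_close w N.+3) (hre_close z N.+3))
  (aeC (aeC (him_close w N.+3) (him_close z N.+3)) Rp_half) (fun phi a b c e => conj a (conj b (conj c e))).
apply: hVW.
- apply: s1; apply: (h1 _ N hN1 (hreal_hre w)).
  apply: (ae_mono base) => phi [g1 [g2 [[g3 g4] [_ /andP[h3 h4]]]]].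
  have [q0 q1 q2 q3 _] := pow_steps N h3 h4.
  have t1 := cabsD ((hrep z phi - hrep w phi) - hrep (hsub z w) phi) (hrep (hsub z w) phi).
  rewrite subrK (cabsB (hrep z phi - hrep w phi) (hrep (hsub z w) phi)) in t1.
  have t2 := cabs_Re (hrep z phi - hrep w phi); rewrite raddfB /= in t2.
  rewrite ler_norml in t2; case/andP: t2 => t2 t2'.
  rewrite ltr_norml in g3; rewrite ltr_norml in g4.
  case/andP: g3 => g3 g3'; case/andP: g4 => g4 g4'.
  clear -t1 t2 t2' g1 g2 g3 g3' g4 g4' q0 q1 q2 q3.
  move: (Rp phi ^+ N) (Rp phi ^+ N.+1) (Rp phi ^+ N.+2) (Rp phi ^+ N.+3)
    t1 t2 t2' g1 g2 g3 g3' g4 g4' q0 q1 q2 q3 => a0 a1 a2 a3 *.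
  rewrite ler_norml; apply/andP; split; lra.
- apply: s2; apply: (h2 _ N hN2 (hreal_him w)).
  apply: (ae_mono base) => phi [g1 [g2 [_ [[g3 g4] /andP[h3 h4]]]]].
  have [q0 q1 q2 q3 _] := pow_steps N h3 h4.
  have t1 := cabsD ((hrep z phi - hrep w phi) - hrep (hsub z w) phi) (hrep (hsub z w) phi).
  rewrite subrK (cabsB (hrep z phi - hrep w phi) (hrep (hsub z w) phi)) in t1.
  have t2 := cabs_Im (hrep z phi - hrep w phi); rewrite raddfB /= in t2.
  rewrite ler_norml in t2; case/andP: t2 => t2 t2'.
  rewrite ltr_norml in g3; rewrite ltr_norml in g4.
  case/andP: g3 => g3 g3'; case/andP: g4 => g4 g4'.
  clear -t1 t2 t2' g1 g2 g3 g3' g4 g4' q0 q1 q2 q3.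
  move: (Rp phi ^+ N) (Rp phi ^+ N.+1) (Rp phi ^+ N.+2) (Rp phi ^+ N.+3)
    t1 t2 t2' g1 g2 g3 g3' g4 g4' q0 q1 q2 q3 => a0 a1 a2 a3 *.
  rewrite ler_norml; apply/andP; split; lra.
Qed.

Lemma main_gen :
  (forall A : I -> C, moderate U A <-> Mrho (sC U A)) /\
  (exists Phi : hatC U -> rhoC U,
     [/\ (forall (A : I -> C) (hA : moderate U A) (hM : Mrho (sC U A)),
            Phi (hcls hA) = rcls hM),
         bijective Phi,
         (forall x y, Phi (hadd x y) = radd (Phi x) (Phi y)),
         (forall x y, Phi (hmul x y) = rmul (Phi x) (Phi y)) &
         [/\ (forall x, hreal x <-> rreal (Phi x)),
             (forall x, Defs.rval (Phi x) = Defs.hval x),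
             (forall x, rnorm (Phi x) = hnorm x) &
             (forall x y, rdist (Phi x) (Phi y) = hdist x y)]]) /\
  (forall S : set (hatC U), order_open S <-> metric_open S).
Proof.
split; first exact: part_i.
split.
  exists Phi; split.
  - exact: Phi_hcls.
  - exact: Phi_bij.
  - exact: Phi_add.
  - exact: Phi_mul.
  split.
  - exact: Phi_real.
  - exact: val_Phi.
  - by move=> x; rewrite /rnorm val_Phi.
  - by move=> x y; rewrite /rdist -Phi_sub /rnorm val_Phi.
move=> S; split; [exact: order_to_metric | exact: metric_to_order].
Qed.

End Main.

Unset Implicit Arguments.
Set Strict Implicit.

Theorem theorem7p4 (d : nat) (U : set (set (D0 Rdefinitions.R d)))
  (hd : (0 < d)%N)
  (hU : free_ultrafilter U)
  (hDn : forall n : nat, U (Dn n.+1))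
  (hgood : cplus_good Rdefinitions.R U) :
  (* (i) *)
  (forall A : D0 Rdefinitions.R d -> Rdefinitions.R[i],
      moderate U A <-> Mrho (sC U A)) /\
  (* (ii) *)
  (exists Phi : hatC U -> rhoC U,
     [/\ (forall (A : D0 Rdefinitions.R d -> Rdefinitions.R[i])
                 (hA : moderate U A) (hM : Mrho (sC U A)),
            Phi (hcls hA) = rcls hM),
         bijective Phi,
         (forall x y, Phi (hadd x y) = radd (Phi x) (Phi y)),
         (forall x y, Phi (hmul x y) = rmul (Phi x) (Phi y)) &
         [/\ (forall x, hreal x <-> rreal (Phi x)),
             (forall x, rval (Phi x) = hval x),
             (forall x, rnorm (Phi x) = hnorm x) &
             (forall x y, rdist (Phi x) (Phi y) = hdist x y)]]) /\
  (* (iii) *)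
  (forall S : set (hatC U), order_open S <-> metric_open S).
Proof. exact: (main_gen hU.1 hDn hd). Qed.
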